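(* Assume the codebook is randomly generated so that all symbols of all codewords are i.i.d. according to some distribution $P$ on $\mathcal X$. Then for any threshold constants $t_1,t_2\in\mathbb R$, any asynchronism level $A\ge1$, any message $m$ and any $l\in\{1,\dots,A\}$, $$\sum_{m'\neq m}\ \sum_{n=1}^{A+N-1}\ \sum_{i=1}^{\min(N,n)}\mathbb P_{m,l}\big(E(m',n,i)\big)\le\big(M^{-(t_1+t_2-1)}A+M^{-(t_2-1)}\big)\,\mathrm{poly}(N).$$
   Context: Channel: finite input alphabet $\mathcal X$, finite output alphabet $\mathcal Y$, transition probabilities $Q(y|x)$, and a noise symbol $\star\in\mathcal X$. A codebook has $M$ codewords $C^N(m)=(C_1(m),\dots,C_N(m))\in\mathcal X^N$, $m=1,\dots,M$. Given the codebook, the message $m$ and the start time $\nu=l$, the outputs $Y_1,Y_2,\dots$ are independent with $Y_i\sim Q(\cdot|\star)$ if $i\le l-1$ or $i\ge l+N$, and $Y_i\sim Q(\cdot|C_{i-l+1}(m))$ for $l\le i\le l+N-1$; $\mathbb P_{m,l}$ is the joint probability over the random codebook and the outputs. Notation: for $j\ge i$, $x_i^j=(x_i,\dots,x_j)$ and $x^j=x_1^j$; $\hat P_{(x^n,y^n)}$ is the empirical joint distribution of a pair of sequences and $\hat P_{y^n}$ the empirical distribution of $y^n$; $I(J)$ is the mutual information of a joint distribution $J$ on $\mathcal X\times\mathcal Y$; $D$ is Kullback–Leibler divergence; logs are natural. For a message $m'$, time $n\ge1$, $i\in\{1,\dots,\min(N,n)\}$ and $k\in\{1,\dots,i\}$,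 $E(m',n,i,k)$ is the intersection of the events $$k\,I\big(\hat P_{(C^k(m'),Y_{n-i+1}^{n-i+k})}\big)+(i-k)\,I\big(\hat P_{(C_{k+1}^i(m'),Y_{n-i+k+1}^n)}\big)\ge t_2\ln M\quad\text{and}\quad i\,D\big(\hat P_{Y_{n-i+1}^n}\,\|\,Q(\cdot|\star)\big)\ge t_1\ln M$$ (a term with zero length, i.e. $(i-k)=0$, is taken to be $0$), and $E(m',n,i)=\bigcap_{k=1}^iE(m',n,i,k)$. $\mathrm{poly}(N)$ denotes a term growing no faster than polynomially in $N$. *)

(* Defs.v *)
From mathcomp Require Import all_boot all_order all_algebra.
From mathcomp Require Import all_classical all_reals all_analysis.
Set Implicit Arguments. Unset Strict Implicit. Unset Printing Implicit Defensive.
Import Order.TTheory GRing.Theory Num.Theory.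
Local Open Scope ring_scope.

Section Defs.
Variable R : realType.
Variables X Y : finType.

Definition is_distr (T : finType) (p : T -> R) :=
  (forall x, 0 <= p x) /\ \sum_(x : T) p x = 1.

Definition is_channel (Q : X -> Y -> R) := forall x, is_distr (Q x).

Definition emp (ys : seq Y) (y : Y) : R :=
  (count (pred1 y) ys)%:R / (size ys)%:R.

Definition emp2 (xs : seq X) (ys : seq Y) (x : X) (y : Y) : R :=
  (count (pred1 (x, y)) (zip xs ys))%:R / (size (zip xs ys))%:R.

Definition mutinf (J : X -> Y -> R) : R :=
  \sum_(x : X) \sum_(y : Y)
     (if J x y == 0 then 0
      else J x y * ln (J x y / ((\sum_(y' : Y) J x y') * (\sum_(x' : X) J x' y)))).

Definition KL (p q : Y -> R) : \bar R :=
  if [exists y, (0 < p y) && (q y == 0)] then +oo%E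
  else (\sum_(y : Y) (if p y == 0 then 0 else p y * ln (p y / q y)))%:E.

Variables (M N T : nat).

Definition codebook := {ffun 'I_M -> {ffun 'I_N -> X}}.
(* outputs Y_1 .. Y_T ; Y_t is stored at ordinal t-1 *)
Definition outputs := {ffun 'I_T -> Y}.

(* codeword symbol, 0-based index j (default star out of range, never used) *)
Definition cw (star : X) (c : codebook) (m : 'I_M) (j : nat) : X :=
  if insub j is Some o then c m o else star.

(* symbols C_{a+1} .. C_b of codeword m (1-based), i.e. 0-based a <= j < b *)
Definition cwin (c : codebook) (m : 'I_M) (a b : nat) : seq X :=
  map (fun j : 'I_N => c m j) (seq.filter (fun j : 'I_N => (a <= j < b)%N) (enum 'I_N)).

(* outputs Y_a .. Y_b (1-based, inclusive) *)
Definition ywin (y : outputs) (a b : nat) : seq Y :=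
  map (fun t : 'I_T => y t) (seq.filter (fun t : 'I_T => (a <= t.+1 <= b)%N) (enum 'I_T)).

(* channel input at (1-based) time s, given message m sent starting at l *)
Definition input (star : X) (c : codebook) (m : 'I_M) (l s : nat) : X :=
  if (l <= s < l + N)%N then cw star c m (s - l) else star.

(* joint probability weight of (codebook, outputs) under P_{m,l} *)
Definition weight (P : X -> R) (Q : X -> Y -> R) (star : X)
    (m : 'I_M) (l : nat) (c : codebook) (y : outputs) : R :=
  (\prod_(m0 : 'I_M) \prod_(j : 'I_N) P (c m0 j)) *
  \prod_(t : 'I_T) Q (input star c m l t.+1) (y t).

Definition Pml (P : X -> R) (Q : X -> Y -> R) (star : X) (m : 'I_M) (l : nat)
    (E : codebook -> outputs -> bool) : R :=
  \sum_(c : codebook) \sum_(y : outputs | E c y) weight P Q star m l c y.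

Definition Evk (Q : X -> Y -> R) (star : X) (t1 t2 : R) (m' : 'I_M)
    (n i k : nat) (c : codebook) (y : outputs) : bool :=
  [&& (k%:R * mutinf (emp2 (cwin c m' 0 k) (ywin y (n - i + 1) (n - i + k)))
       + (if (i - k)%N == 0%N then 0
          else (i - k)%:R *
               mutinf (emp2 (cwin c m' k i) (ywin y (n - i + k + 1) n)))
       >= t2 * ln (M%:R))
   & ((i%:R)%:E * KL (emp (ywin y (n - i + 1) n)) (Q star)
       >= (t1 * ln (M%:R))%:E)%E].

Definition Ev (Q : X -> Y -> R) (star : X) (t1 t2 : R) (m' : 'I_M)
    (n i : nat) (c : codebook) (y : outputs) : bool :=
  all (fun k => Evk Q star t1 t2 m' n i k c y) (iota 1 i).

End Defs.

(* Main.v *)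
Require Import Defs.
From mathcomp Require Import all_boot all_order all_algebra.
From mathcomp Require Import all_classical all_reals all_analysis.
From mathcomp Require Import ring lra zify.
Import Order.TTheory GRing.Theory Num.Theory.
Local Open Scope ring_scope.
Section Core.
Variables (R : realType) (X Y : finType).

Lemma sum_seq_count (h : X*Y -> R) (zs : seq (X*Y)) :
  \sum_(z <- zs) h z = \sum_(p : X*Y) (count_mem p zs)%:R * h p.
Proof.
elim: zs => [|z s IH]; first by rewrite big_nil big1 // => p _; rewrite mul0r.
rewrite big_cons IH.
under [RHS]eq_bigr => p _ do rewrite [seq.count _ (_ :: _)]/= natrD mulrDl.
rewrite big_split /=; congr (_ + _).
rewrite (bigD1 z) //= eqxx mul1r big1 ?addr0 // => p /negPf.
by rewrite eq_sym => ->; rewrite mul0r.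
Qed.

Lemma sum_count_size (zs : seq (X*Y)) :
  \sum_(p : X*Y) (count_mem p zs)%:R = (size zs)%:R :> R.
Proof.
have := sum_seq_count (fun _ => 1) zs.
rewrite big_const_seq count_predT.
under [in RHS]eq_bigr => p _ do rewrite mulr1.
move=> <-. by rewrite -[RHS]mulr1 iter_addr_0 mulr_natl.
Qed.

Lemma prod_expR (s : seq (X*Y)) (f : X*Y -> R) :
  (forall z, z \in s -> 0 < f z) ->
  \prod_(z <- s) f z = expR (\sum_(z <- s) ln (f z)).
Proof.
elim: s => [|z s IH] H; first by rewrite !big_nil expR0.
rewrite !big_cons expRD IH; last by move=> w ws; apply: H; rewrite inE ws orbT.
by rewrite lnK // posrE H // inE eqxx.
Qed.

Lemma count_gt0 (zs : seq (X*Y)) p : (0 < count_mem p zs)%N = (p \in zs).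
Proof. by rewrite -has_count has_pred1. Qed.

Section Core0.
Variables (zs : seq (X*Y)) (p : X -> R) (q : Y -> R) (r1 r2 : R).
Let i : R := (size zs)%:R.
Let cnt (z : X*Y) : R := (count_mem z zs)%:R.
Let cX a := \sum_b cnt (a, b).
Let cY b := \sum_a cnt (a, b).
Let J a b := cnt (a,b) / i.

Hypothesis zs0 : (0 < size zs)%N.
Hypothesis p0 : forall a, 0 <= p a.
Hypothesis p1 : \sum_a p a <= 1.
Hypothesis pos : forall z, z \in zs -> 0 < p z.1 /\ 0 < q z.2.
Hypothesis hr1 : r1 <= i * mutinf J.
Hypothesis hr2 : r2 <= \sum_b (if cY b == 0 then 0 else cY b * ln (cY b / (i * q b))).

Lemma i_gt0 : 0 < i. Proof. by rewrite ltr0n. Qed.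
Lemma cnt_ge0 z : 0 <= cnt z. Proof. by rewrite ler0n. Qed.
Lemma cnt_gt0 z : (0 < cnt z) = (z \in zs).
Proof. by rewrite ltr0n count_gt0. Qed.

Lemma cX_gt0 a b : (a, b) \in zs -> 0 < cX a.
Proof.
move=> H; rewrite /cX (bigD1 b) //= ltr_wpDr //; last by rewrite cnt_gt0.
by apply: sumr_ge0 => *; apply: cnt_ge0.
Qed.
Lemma cY_gt0 a b : (a, b) \in zs -> 0 < cY b.
Proof.
move=> H; rewrite /cY (bigD1 a) //= ltr_wpDr //; last by rewrite cnt_gt0.
by apply: sumr_ge0 => *; apply: cnt_ge0.
Qed.

Lemma sum_pair (G : X*Y -> R) : \sum_(z : X*Y) G z = \sum_a \sum_b G (a, b).
Proof. by rewrite pair_bigA; apply: eq_bigr => [[a b]]. Qed.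

Lemma cY_pos b : cY b != 0 -> exists a, (a, b) \in zs.
Proof.
case: (pickP (fun a => (a,b) \in zs)) => [a H|H] Hne; first by exists a.
exfalso; move/eqP: Hne; apply; rewrite /cY big1 // => a _.
by rewrite /cnt; have /count_memPn -> := negbT (H a).
Qed.

Lemma cX_pos a : cX a != 0 -> exists b, (a, b) \in zs.
Proof.
case: (pickP (fun b => (a,b) \in zs)) => [b H|H] Hne; first by exists b.
exfalso; move/eqP: Hne; apply; rewrite /cX big1 // => b _.
by rewrite /cnt; have /count_memPn -> := negbT (H b).
Qed.

Lemma sum_cX : \sum_a cX a = i.
Proof. by rewrite /cX -sum_pair sum_count_size. Qed.

Lemma core0 :
  \prod_(z <- zs) (p z.1 * q z.2) <= expR (- (r1 + r2)) * \prod_(z <- zs) J z.1 z.2.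
Proof.
have ipos := i_gt0.
rewrite prod_expR; last by move=> z /pos [] *; apply: mulr_gt0.
rewrite (prod_expR zs (fun z => J z.1 z.2)); last first.
  by move=> [a b] H /=; rewrite divr_gt0 // cnt_gt0.
rewrite -expRD ler_expR.
pose A (z : X*Y) := ln (J z.1 z.2) - ln (cX z.1 / i) - ln (cY z.2 / i).
pose B (z : X*Y) := ln (cY z.2 / i) - ln (q z.2).
pose C (z : X*Y) := ln (cX z.1 / i) - ln (p z.1).
have E : \sum_(z <- zs) ln (J z.1 z.2) =
   \sum_(z <- zs) ln (p z.1 * q z.2) + (\sum_(z <- zs) A z + \sum_(z <- zs) B z + \sum_(z <- zs) C z).
  rewrite -!big_split /=; apply: eq_big_seq => z /pos [h1 h2].
  by rewrite lnM ?posrE // /A /B /C; ring.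
rewrite E addrCA lerDl.
have HA : r1 <= \sum_(z <- zs) A z.
  apply: (le_trans hr1); rewrite sum_seq_count /mutinf mulr_sumr.
  under eq_bigr do rewrite mulr_sumr.
  rewrite pair_bigA /=; rewrite le_eqVlt; apply/orP; left; apply/eqP/eq_bigr => [[a b]] _ /=.
  have sX : \sum_y' J a y' = cX a / i by rewrite /cX mulr_suml.
  have sY : \sum_x' J x' b = cY b / i by rewrite /cY mulr_suml.
  rewrite sX sY; case: (boolP ((a,b) \in zs)) => H.
    have c0 : 0 < cnt (a,b) by rewrite cnt_gt0.
    have J0 : 0 < J a b by rewrite divr_gt0.
    have X0 : 0 < cX a / i by rewrite divr_gt0 // (cX_gt0 _ _ H).
    have Y0 : 0 < cY b / i by rewrite divr_gt0 // (cY_gt0 _ _ H).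
    rewrite gt_eqF // ln_div ?posrE ?(mulr_gt0 X0 Y0) // lnM ?posrE //.
    rewrite /A /= mulrA [i * _]mulrC divfK ?gt_eqF //; ring.
  have c0 : count_mem (a,b) zs = 0%N by apply/count_memPn.
  by rewrite /J /cnt c0 mul0r eqxx mulr0 mul0r.
have HB : r2 <= \sum_(z <- zs) B z.
  apply: (le_trans hr2); rewrite sum_seq_count sum_pair exchange_big /=.
  apply: ler_sum => b _ /=; rewrite /B /= -mulr_suml.
  change (\sum_a (count_mem (a,b) zs)%:R) with (cY b).
  case: eqP => [->|/eqP H]; first by rewrite mul0r.
  have [a /pos [_ qb]] := cY_pos _ H.
  have Y0 : 0 < cY b / i by rewrite divr_gt0 // lt_def H; apply: sumr_ge0 => *; apply: cnt_ge0.
  by rewrite invfM mulrA (@ln_div _ (cY b / i) (q b)) ?posrE.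
have HC : 0 <= \sum_(z <- zs) C z.
  rewrite sum_seq_count sum_pair.
  under eq_bigr => a _ do rewrite /C /= -mulr_suml.
  change (\sum_a cX a * (ln (cX a / i) - ln (p a)) >= 0).
  apply: (@le_trans _ _ (\sum_a (cX a - i * p a))); last first.
    apply: ler_sum => a _; case: (eqVneq (cX a) 0) => [->|H].
      by rewrite mul0r sub0r oppr_le0 mulr_ge0 // ltW.
    have [b /pos [pa _]] := cX_pos _ H.
    have cX0 : 0 < cX a by rewrite lt_def H; apply: sumr_ge0 => *; apply: cnt_ge0.
    have u0 : 0 < cX a / i by rewrite divr_gt0.
    have L : ln (p a / (cX a / i)) <= p a / (cX a / i) - 1.
      have h := @le_ln1Dx _ (p a / (cX a / i) - 1).
      rewrite (_ : 1 + (p a / (cX a / i) - 1) = p a / (cX a / i)) in h; last by ring.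
      apply: h.
      by rewrite ltrBrDl subrr divr_gt0.
    rewrite ln_div ?posrE // in L.
    have : cX a * (ln (p a) - ln (cX a / i)) <= cX a * (p a / (cX a / i) - 1).
      by rewrite ler_wpM2l // ltW.
    have -> : cX a * (p a / (cX a / i) - 1) = i * p a - cX a.
      by field; rewrite gt_eqF.
    lra.
  rewrite sumrB sum_cX -mulr_sumr subr_ge0.
  by rewrite -[leRHS]mulr1 ler_wpM2l // ltW.
have := lerD (lerD HA HB) HC; lra.
Qed.
End Core0.

Section Core1.
Variables (zs : seq (X*Y)) (p : X -> R).
Let i : R := (size zs)%:R.
Let cnt (z : X*Y) : R := (count_mem z zs)%:R.
Let cY b := \sum_a cnt (a, b).
Let J a b := cnt (a,b) / i.
Hypothesis zs0 : (0 < size zs)%N.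
Hypothesis p0 : forall a, 0 <= p a.
Hypothesis p1 : \sum_a p a <= 1.

Lemma cY_gt0' a b : (a, b) \in zs -> 0 < cY b.
Proof.
move=> H; rewrite /cY (bigD1 a) //= ltr_wpDr //; last by rewrite /cnt ltr0n count_gt0.
by apply: sumr_ge0 => *; rewrite ler0n.
Qed.

Lemma prod_zero (f : X*Y -> R) : ~~ all (fun z => 0 < f z) zs -> (forall z, 0 <= f z) ->
  \prod_(z <- zs) f z = 0.
Proof.
move=> /allPn [z zin fz] f0; rewrite (big_rem z) //=.
have -> : f z = 0 by apply/eqP; rewrite eq_le f0 andbT leNgt.
by rewrite mul0r.
Qed.

Lemma coreA r : r <= i * mutinf J ->
  \prod_(z <- zs) p z.1 <= expR (- r) * \prod_(z <- zs) (cnt z / cY z.2).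
Proof.
move=> hr.
have rhs0 : 0 <= expR (- r) * \prod_(z <- zs) (cnt z / cY z.2).
  by apply: mulr_ge0; [apply: expR_ge0 | apply: prodr_ge0 => z _; apply: divr_ge0; [rewrite ler0n | apply: sumr_ge0 => *; rewrite ler0n]].
case: (boolP (all (fun z => 0 < p z.1) zs)) => [/allP ppos|pn]; last by rewrite prod_zero.
have ipos : 0 < i by rewrite ltr0n.
have qpos : forall z, z \in zs -> 0 < cY z.2 / i.
  by move=> [a b] zin; rewrite divr_gt0 // (cY_gt0' _ _ zin).
have := @core0 zs p (fun b => cY b / i) r 0 zs0 p0 p1.
rewrite addr0 => /(_ _ hr) H.
have H2 : \prod_(z <- zs) (p z.1 * (cY z.2 / i)) <= expR (- r) * \prod_(z <- zs) (cnt z / i).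
  apply: H.
    by move=> z zin; split; [apply: ppos | apply: qpos].
  rewrite le_eqVlt; apply/orP; left; apply/eqP; rewrite big1 // => b _.
  case: ifP => // /negbT c0.
  rewrite -/(cY b) mulrCA divff ?gt_eqF ?ltr0n // mulr1 divff // ln1 mulr0 //.
rewrite big_split /= in H2.
have Qp : 0 < \prod_(z <- zs) (cY z.2 / i).
  rewrite big_seq; apply: prodr_gt0 => z zin; exact: qpos.
rewrite -(ler_pM2r Qp) (le_trans H2) // -mulrA ler_pM2l ?expR_gt0 //.
rewrite -big_split /=; rewrite le_eqVlt; apply/orP; left; apply/eqP.
apply: eq_big_seq => [[a b]] zin /=.
have cb := cY_gt0' _ _ zin.
rewrite /cnt; field; rewrite ?gt_eqF //.
Qed.


Lemma count_unzip2 b : (count_mem b (unzip2 zs))%:R = cY b.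
Proof.
rewrite count_map /cY /cnt.
elim: zs => [|[a0 b0] s IH] /=; first by rewrite big1.
rewrite natrD IH.
under [RHS]eq_bigr => a _ do rewrite natrD.
rewrite big_split /=; congr (_ + _).
rewrite (bigD1 a0) //= big1 ?addr0; last first.
  by move=> a /negPf H; rewrite xpair_eqE eq_sym H.
by rewrite xpair_eqE eqxx.
Qed.

Lemma coreB (q : Y -> R) (r1 r2 : R) : (forall b, 0 <= q b) ->
  r1 <= i * mutinf J ->
  (r2%:E <= i%:E * KL (fun b => ((count_mem b (unzip2 zs))%:R / (size (unzip2 zs))%:R)%R) q)%E ->
  \prod_(z <- zs) (p z.1 * q z.2) <=
    expR (- (r1 + r2)) * \prod_(z <- zs) (cnt z / cY z.2 * (cY z.2 / i)).
Proof.
move=> q0 hr1 hr2.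
have ipos : 0 < i by rewrite ltr0n.
have rhs0 : 0 <= expR (- (r1 + r2)) * \prod_(z <- zs) (cnt z / cY z.2 * (cY z.2 / i)).
  apply: mulr_ge0; first exact: expR_ge0.
  apply: prodr_ge0 => z _; apply: mulr_ge0; apply: divr_ge0; rewrite ?ler0n ?(ltW ipos) //;
  by apply: sumr_ge0 => *; rewrite ler0n.
case: (boolP (all (fun z => 0 < p z.1 * q z.2) zs)) => [/allP ppos|pn]; last first.
  by rewrite prod_zero // => z; apply: mulr_ge0.
have pos : forall z, z \in zs -> 0 < p z.1 /\ 0 < q z.2.
  move=> z /ppos h; split; rewrite lt_def ?p0 ?q0 andbT; apply/eqP => e;
  by move: h; rewrite e ?mul0r ?mulr0 ltxx.
rewrite size_map in hr2.
pose e b : R := (count_mem b (unzip2 zs))%:R / (size zs)%:R.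
have KLE : KL e q = (\sum_b (if e b == 0 then 0 else e b * ln (e b / q b)))%:E.
  rewrite /KL; case: ifP => [/existsP [b /andP [h1 /eqP h2]]|//].
  exfalso; move: h1; rewrite pmulr_lgt0 ?invr_gt0 // ltr0n -has_count has_pred1 => /mapP [z zin zb].
  by have [_] := pos z zin; rewrite -zb h2 ltxx.
rewrite -/e KLE -EFinM lee_fin in hr2.
apply: le_trans (@core0 zs p q r1 r2 zs0 p0 p1 pos hr1 _) _.
  apply: (le_trans hr2); rewrite mulr_sumr; apply: ler_sum => b _.
  rewrite /e count_unzip2 -/(cY b) -/i.
  have [->|cb] := eqVneq (cY b) 0; first by rewrite mul0r eqxx mulr0.
  rewrite mulf_eq0 (negPf cb) invr_eq0 gt_eqF //=.
  rewrite mulrA mulrCA divff ?gt_eqF // mulr1 invfM mulrA.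
  by [].
rewrite ler_pM2l ?expR_gt0 //; rewrite le_eqVlt; apply/orP; left; apply/eqP.
apply: eq_big_seq => [[a b]] zin /=.
have cb := cY_gt0' _ _ zin.
rewrite /cnt; field; rewrite ?gt_eqF //.
Qed.

End Core1.

End Core.
Section GW.
Variables (R : realType) (X Y : finType) (M N T : nat) (m : 'I_M).

Lemma prod_sum_ffun (I J : finType) (F : I -> J -> R) :
  \sum_(f : {ffun I -> J}) \prod_i F i (f i) = \prod_i \sum_j F i j.
Proof. by rewrite bigA_distr_bigA. Qed.

Lemma prod_sum_le1 (I J : finType) (F : I -> J -> R) :
  (forall i j, 0 <= F i j) -> (forall i, \sum_j F i j <= 1) ->
  0 <= \sum_(f : {ffun I -> J}) \prod_i F i (f i) <= 1.
Proof.
move=> F0 F1; rewrite prod_sum_ffun; apply/andP; split.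
  by apply: prodr_ge0 => i _; apply: sumr_ge0.
by apply: prodr_ile1 => i _; rewrite F1 andbT; apply: sumr_ge0.
Qed.

Variables (F : 'I_M -> 'I_N -> X -> {ffun 'I_T -> Y} -> R)
  (G : 'I_T -> {ffun 'I_N -> X} -> Y -> R) (Fm : 'I_N -> X -> R).
Hypothesis F0 : forall m0 j a y, 0 <= F m0 j a y.
Hypothesis F1 : forall m0 j y, \sum_a F m0 j a y <= 1.
Hypothesis G0 : forall t u b, 0 <= G t u b.
Hypothesis G1 : forall t u, \sum_b G t u b <= 1.
Hypothesis Fm0 : forall j a, 0 <= Fm j a.
Hypothesis Fm1 : forall j, \sum_a Fm j a <= 1.
Hypothesis FmE : forall j a y, F m j a y = Fm j a.

Lemma sumGW :
  \sum_(c : {ffun 'I_M -> {ffun 'I_N -> X}}) \sum_(y : {ffun 'I_T -> Y})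
     ((\prod_m0 \prod_j F m0 j (c m0 j) y) * \prod_t G t (c m) (y t)) <= 1.
Proof.
rewrite exchange_big /=.
pose H m0 (u : {ffun 'I_N -> X}) (y : {ffun 'I_T -> Y}) :=
  (\prod_j F m0 j (u j) y) * (if m0 == m then \prod_t G t u (y t) else 1).
have E : forall (y : {ffun 'I_T -> Y}) (c : {ffun 'I_M -> {ffun 'I_N -> X}}), (\prod_m0 \prod_j F m0 j (c m0 j) y) * \prod_t G t (c m) (y t)
    = \prod_m0 H m0 (c m0) y.
  move=> y c; rewrite /H big_split /=; congr (_ * _).
  by rewrite [in RHS](bigD1 m) //= eqxx [X in _ = _ * X]big1 ?mulr1 // => m0 /negPf ->.
under eq_bigr => y _ do rewrite (eq_bigr _ (fun c _ => E y c)).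
under eq_bigr => y _ do rewrite (prod_sum_ffun _ _ (fun m0 u => H m0 u y)).
apply: (@le_trans _ _ (\sum_y \sum_u H m u y)).
  apply: ler_sum => y _; rewrite (bigD1 m) //=.
  have h0 : 0 <= \sum_u H m u y.
    by apply: sumr_ge0 => u _; apply: mulr_ge0; [apply: prodr_ge0 | rewrite eqxx; apply: prodr_ge0].
  rewrite -[leRHS]mulr1 ler_wpM2l //; apply: prodr_ile1 => m0 /negPf Hm.
  rewrite /H Hm.
  under eq_bigr do rewrite mulr1.
  by apply: (@prod_sum_le1 _ _ (fun j a => F m0 j a y)) => [j a|j]; [exact: F0 | exact: F1].
rewrite exchange_big /=; rewrite /H eqxx.
under eq_bigr => u _ do (under eq_bigr => y _ do (under eq_bigr => j _ do rewrite FmE); rewrite -mulr_sumr).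
apply: (@le_trans _ _ (\sum_(u : {ffun 'I_N -> X}) \prod_j Fm j (u j))); last first.
  by case/andP: (prod_sum_le1 _ _ _ Fm0 Fm1).
apply: ler_sum => u _; rewrite -[leRHS]mulr1 ler_wpM2l //.
  by apply: prodr_ge0.
by case/andP: (prod_sum_le1 _ _ _ (fun t b => G0 t u b) (fun t => G1 t u)).
Qed.
End GW.
Lemma filter_iota0 a b K : (b <= K)%N ->
  seq.filter (fun j => (a <= j < b)%N) (iota 0 K) = iota a (b - a).
Proof.
move=> bK; case: (leqP a b) => ab; last first.
  rewrite (_ : b - a = 0)%N; last by apply/eqP; rewrite subn_eq0 ltnW.
  rewrite (seq.eq_filter (a2 := pred0)) ?filter_pred0 // => j /=.
  apply/negP => H2; lia.
have -> : K = (a + (b - a) + (K - b))%N by rewrite subnKC // subnKC.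
rewrite !iotaD !filter_cat add0n subnKC //.
rewrite (seq.eq_in_filter (a1 := fun j => (a <= j < b)%N) (a2 := pred0) (s := iota 0 a)); last first.
  move=> j; rewrite mem_iota => H; apply/negbTE/negP => H2; lia.
rewrite (seq.eq_in_filter (a1 := fun j => (a <= j < b)%N) (a2 := pred0) (s := iota b (K - b))); last first.
  move=> j; rewrite mem_iota => H; apply/negbTE/negP => H2; lia.
rewrite (seq.eq_in_filter (a1 := fun j => (a <= j < b)%N) (a2 := predT) (s := iota a (b - a))); last first.
  move=> j; rewrite mem_iota => H /=; apply/idP; lia.
by rewrite !filter_pred0 filter_predT cats0.
Qed.

Lemma val_filter_ord K (p : pred nat) :
  map val (seq.filter (fun j : 'I_K => p j) (enum 'I_K)) = seq.filter p (iota 0 K).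
Proof. by rewrite -val_enum_ord seq.filter_map. Qed.

Lemma insub_ordK K (t : 'I_K) : insub (val t) = Some t.
Proof. exact: valK. Qed.

Section Main.
Variables (R : realType) (X Y : finType) (Q : X -> Y -> R) (star : X) (y0 : Y).
Variables (P : X -> R) (N M A : nat) (t1 t2 : R) (m m' : 'I_M) (l n i : nat).
Hypotheses (i1 : (1 <= i)%N) (iN : (i <= N)%N) (iN2 : (i <= n)%N) (nT : (n <= A + N - 1)%N).
Local Notation T := (A + N - 1)%N.
Local Notation CB := {ffun 'I_M -> {ffun 'I_N -> X}}.
Local Notation OU := {ffun 'I_T -> Y}.

Definition yn (y : OU) (s : nat) : Y := if insub s is Some o then y o else y0.
Definition sN := seq.filter (fun j : 'I_N => (0 <= j < i)%N) (enum 'I_N).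
Definition sT := seq.filter (fun t : 'I_T => (n - i + 1 <= t.+1 <= n)%N) (enum 'I_T).
Definition zsf (c : CB) (y : OU) := zip (cwin c m' 0 i) (ywin y (n - i + 1)%N n).

Lemma val_sN : map val sN = iota 0 i.
Proof. by rewrite /sN (val_filter_ord _ (fun j => (0 <= j < i)%N)) filter_iota0 // subn0. Qed.

Lemma val_sT : map val sT = iota (n - i) i.
Proof.
rewrite /sT (val_filter_ord _ (fun t => (n - i + 1 <= t.+1 <= n)%N)).
rewrite (seq.eq_filter (a2 := fun t => (n - i <= t < n)%N)); last first.
  move=> t /=; apply/idP/idP => /andP [h1 h2]; apply/andP; split; lia.
rewrite filter_iota0 //; congr iota; lia.
Qed.

Lemma ywin_map (y : OU) : ywin y (n - i + 1)%N n = map (fun j : 'I_N => yn y (n - i + j)%N) sN.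
Proof.
have -> : ywin y (n - i + 1)%N n = map (yn y) (map val sT).
  rewrite -map_comp /ywin -/sT; apply: eq_map => t /=.
  by rewrite /yn insub_ordK.
rewrite val_sT -(addn0 (n - i)%N) iotaDl -val_sN -!map_comp addn0.
by apply: eq_map.
Qed.

Lemma zsf_map c y : zsf c y = map (fun j : 'I_N => (c m' j, yn y (n - i + j)%N)) sN.
Proof. by rewrite /zsf ywin_map /cwin -/sN zip_map. Qed.

Lemma size_sN : size sN = i.
Proof. by rewrite -(size_map val) val_sN size_iota. Qed.

Lemma size_zsf c y : size (zsf c y) = i.
Proof. by rewrite zsf_map size_map size_sN. Qed.

Lemma unzip2_zsf c y : unzip2 (zsf c y) = ywin y (n - i + 1)%N n.
Proof. by rewrite /zsf unzip2_zip // ywin_map /cwin !size_map -/sN. Qed.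

Lemma prod_zsf c y (f : X * Y -> R) :
  \prod_(z <- zsf c y) f z = \prod_(j : 'I_N | (j < i)%N) f (c m' j, yn y (n - i + j)%N).
Proof. by rewrite zsf_map big_map big_filter big_enum_cond. Qed.

Lemma prod_zsf2 c y (g : Y -> R) :
  \prod_(z <- zsf c y) g z.2 = \prod_(t : 'I_T | (n - i <= t < n)%N) g (y t).
Proof.
rewrite -(big_map snd xpredT g) -/(unzip2 (zsf c y)) unzip2_zsf /ywin -/sT big_map big_filter big_enum_cond.
apply: eq_bigl => t /=; apply/idP/idP => /andP [h1 h2]; apply/andP; split; lia.
Qed.

Hypotheses (HQ : is_channel Q) (HP : is_distr P) (mm : m' != m).
Local Notation TT := {ffun (X * Y) -> 'I_i.+1}.
Definition tc (Tf : TT) a b : R := (Tf (a, b) : nat)%:R.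
Definition Vt Tf a b := tc Tf a b / \sum_a' tc Tf a' b.
Definition JYt Tf b := (\sum_a tc Tf a b) / \sum_a \sum_b' tc Tf a b'.
Definition T0 c y : TT := [ffun z => inord (count_mem z (zsf c y))].
Definition Fw (Tf : TT) (m0 : 'I_M) (j : 'I_N) (a : X) (y : OU) : R :=
  if (m0 == m') && (j < i)%N then Vt Tf a (yn y (n - i + j)%N) else P a.
Definition G0 (t : 'I_T) (u : {ffun 'I_N -> X}) (b : Y) : R :=
  Q (if (l <= t.+1 < l + N)%N then (if insub (t.+1 - l)%N is Some o then u o else star)
     else star) b.
Definition Gn (Tf : TT) (t : 'I_T) u b : R := if (n - i <= t < n)%N then JYt Tf b else G0 t u b.
Definition GW (F : 'I_M -> 'I_N -> X -> OU -> R) (G : 'I_T -> {ffun 'I_N -> X} -> Y -> R)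
  (c : CB) (y : OU) := (\prod_m0 \prod_j F m0 j (c m0 j) y) * \prod_t G t (c m) (y t).

Lemma weightE c y : weight P Q star m l c y = GW (fun m0 j a y => P a) G0 c y.
Proof. by []. Qed.

Lemma tc_T0 c y a b : tc (T0 c y) a b = (count_mem (a, b) (zsf c y))%:R.
Proof.
by rewrite /tc ffunE inordK // ltnS -(size_zsf c y) count_size.
Qed.

Lemma tc_ge0 Tf a b : 0 <= tc Tf a b. Proof. by rewrite ler0n. Qed.

Lemma Vt_ge0 Tf a b : 0 <= Vt Tf a b.
Proof. by apply: divr_ge0; [apply: tc_ge0 | apply: sumr_ge0 => *; apply: tc_ge0]. Qed.

Lemma Vt_sum Tf b : \sum_a Vt Tf a b <= 1.
Proof.
rewrite /Vt -mulr_suml; have [->|h] := eqVneq (\sum_a tc Tf a b) 0.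
  by rewrite mul0r ler01.
by rewrite divff.
Qed.

Lemma JYt_ge0 Tf b : 0 <= JYt Tf b.
Proof. by apply: divr_ge0; apply: sumr_ge0 => *; rewrite ?sumr_ge0 // => *; apply: tc_ge0. Qed.

Lemma JYt_sum Tf : \sum_b JYt Tf b <= 1.
Proof.
rewrite /JYt -mulr_suml exchange_big /=.
have [->|h] := eqVneq (\sum_a \sum_b tc Tf a b) 0; first by rewrite mul0r ler01.
by rewrite divff.
Qed.

Lemma P_ge0 a : 0 <= P a. Proof. by case: HP. Qed.
Lemma P_sum : \sum_a P a <= 1. Proof. by case: HP => _ ->. Qed.

Lemma Q_ge0 x b : 0 <= Q x b. Proof. by case: (HQ x). Qed.
Lemma Q_sum x : \sum_b Q x b = 1. Proof. by case: (HQ x). Qed.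
Lemma G0_ge0 t u b : 0 <= G0 t u b. Proof. exact: Q_ge0. Qed.
Lemma G0_sum t u : \sum_b G0 t u b <= 1.
Proof. by rewrite /G0 Q_sum. Qed.

Lemma Fw_ge0 Tf m0 j a y : 0 <= Fw Tf m0 j a y.
Proof. by rewrite /Fw; case: ifP => _; [apply: Vt_ge0 | apply: P_ge0]. Qed.
Lemma Fw_sum Tf m0 j y : \sum_a Fw Tf m0 j a y <= 1.
Proof. by rewrite /Fw; case: ((m0 == m') && (j < i)%N); [apply: Vt_sum | apply: P_sum]. Qed.

Lemma Gn_ge0 Tf t u b : 0 <= Gn Tf t u b.
Proof. by rewrite /Gn; case: ifP => _; [apply: JYt_ge0 | apply: G0_ge0]. Qed.
Lemma Gn_sum Tf t u : \sum_b Gn Tf t u b <= 1.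
Proof. by rewrite /Gn; case: (n - i <= t < n)%N; [apply: JYt_sum | apply: G0_sum]. Qed.

Lemma FwE Tf j a y : Fw Tf m j a y = P a.
Proof. by rewrite /Fw eq_sym (negPf mm). Qed.

Lemma Pml_bound (E : CB -> OU -> bool) (e : R) (G : TT -> 'I_T -> {ffun 'I_N -> X} -> Y -> R) :
  0 <= e ->
  (forall Tf t u b, 0 <= G Tf t u b) -> (forall Tf t u, \sum_b G Tf t u b <= 1) ->
  (forall c y, E c y -> weight P Q star m l c y <= e * \sum_(Tf : TT) GW (Fw Tf) (G Tf) c y) ->
  Pml (N := N) (T := T) P Q star m l E <= e * #|{: TT}|%:R.
Proof.
move=> e0 G0' G1' H.
rewrite /Pml.
apply: (@le_trans _ _ (\sum_(c : CB) \sum_(y : OU) e * \sum_(Tf : TT) GW (Fw Tf) (G Tf) c y)).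
  apply: ler_sum => c _; rewrite big_mkcond /=; apply: ler_sum => y _.
  case: ifP => [/H //|_]; apply: mulr_ge0 => //; apply: sumr_ge0 => Tf _.
  by apply: mulr_ge0; [apply: prodr_ge0 => m0 _; apply: prodr_ge0 => j _; apply: Fw_ge0 | apply: prodr_ge0 => t _; apply: G0'].
under eq_bigr do under eq_bigr do rewrite mulr_sumr.
under eq_bigr do rewrite exchange_big.
rewrite exchange_big /= -sum1_card natr_sum mulr_sumr.
apply: ler_sum => Tf _.
under eq_bigr do rewrite -mulr_sumr.
rewrite -mulr_sumr ler_wpM2l //.
apply: (@sumGW R X Y M N T m (Fw Tf) (G Tf) (fun j a => P a)).
- exact: Fw_ge0.
- exact: Fw_sum.
- exact: G0'.
- exact: G1'.
- move=> _ a; exact: P_ge0.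
- move=> _; exact: P_sum.
- exact: FwE.
Qed.

Local Notation EV := (Ev (N := N) (T := T) Q star t1 t2 m' n i).

Lemma Ev_cond c y : EV c y ->
  t2 * ln (M%:R) <= i%:R * mutinf (emp2 R (cwin c m' 0 i) (ywin y (n - i + 1)%N n)) /\
  ((t1 * ln (M%:R))%:E <= (i%:R)%:E * KL (emp R (ywin y (n - i + 1)%N n)) (Q star))%E.
Proof.
move=> /allP /(_ i); rewrite mem_iota i1 add1n ltnSn => /(_ isT) /andP [h1 h2].
split=> //; move: h1; rewrite subnn eqxx addr0 subnK //.
Qed.

Lemma key_overlap c y : EV c y ->
  \prod_(j : 'I_N | (j < i)%N) P (c m' j) <=
  expR (- (t2 * ln (M%:R))) *
  \prod_(j : 'I_N | (j < i)%N) Vt (T0 c y) (c m' j) (yn y (n - i + j)%N).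
Proof.
case/Ev_cond => h1 _.
rewrite -(prod_zsf c y (fun z => P z.1)) -(prod_zsf c y (fun z => Vt (T0 c y) z.1 z.2)).
have zs0 : (0 < size (zsf c y))%N by rewrite size_zsf.
have := @coreA R X Y (zsf c y) P zs0 P_ge0 P_sum (t2 * ln (M%:R)).
have -> : forall x, (size (zsf c y))%:R * x = i%:R * x :> R by move=> x; rewrite size_zsf.
move=> /(_ h1) H; apply: (le_trans H); rewrite le_eqVlt; apply/orP; left; apply/eqP.
congr (_ * _); apply: eq_bigr => [[a b]] _ /=.
rewrite /Vt tc_T0; congr (_ / _); apply: eq_bigr => a' _; by rewrite tc_T0.
Qed.

Lemma key_noise c y : EV c y ->
  \prod_(j : 'I_N | (j < i)%N) P (c m' j) * \prod_(t : 'I_T | (n - i <= t < n)%N) Q star (y t) <=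
  expR (- ((t1 + t2) * ln (M%:R))) *
  (\prod_(j : 'I_N | (j < i)%N) Vt (T0 c y) (c m' j) (yn y (n - i + j)%N) *
   \prod_(t : 'I_T | (n - i <= t < n)%N) JYt (T0 c y) (y t)).
Proof.
case/Ev_cond => h1 h2.
rewrite -(prod_zsf c y (fun z => P z.1)) -(prod_zsf c y (fun z => Vt (T0 c y) z.1 z.2)).
rewrite -(prod_zsf2 c y (Q star)) -(prod_zsf2 c y (JYt (T0 c y))) -!big_split /=.
have zs0 : (0 < size (zsf c y))%N by rewrite size_zsf.
have := @coreB R X Y (zsf c y) P zs0 P_ge0 P_sum (Q star) (t2 * ln (M%:R)) (t1 * ln (M%:R)) (Q_ge0 star).
have -> : forall x, (size (zsf c y))%:R * x = i%:R * x :> R by move=> x; rewrite size_zsf.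
move=> /(_ h1); rewrite unzip2_zsf size_zsf => /(_ h2) H.
rewrite mulrDl addrC; apply: (le_trans H); rewrite le_eqVlt; apply/orP; left; apply/eqP.
congr (_ * _); apply: eq_bigr => [[a b]] _ /=.
rewrite /Vt /JYt tc_T0; congr (_ / _ * _).
  by apply: eq_bigr => a' _; rewrite tc_T0.
have -> : \sum_a0 \sum_b' tc (T0 c y) a0 b' = i%:R.
  under eq_bigr do under eq_bigr do rewrite tc_T0.
  by rewrite -(@sum_pair R X Y (fun z => (count_mem z (zsf c y))%:R)) sum_count_size size_zsf.
by congr (_ / _); apply: eq_bigr => a' _; rewrite tc_T0.
Qed.


Lemma aux1 (a b e r g : R) : 0 <= r -> 0 <= g -> a <= e * b -> a * r * g <= e * (b * r * g).
Proof. by move=> r0 g0 h; rewrite !mulrA ler_wpM2r // ler_wpM2r. Qed.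

Lemma aux2 (a b e r g qw jw : R) : 0 <= r -> 0 <= g -> a * qw <= e * (b * jw) ->
  a * r * (qw * g) <= e * (b * r * (jw * g)).
Proof.
move=> r0 g0 h.
have -> : a * r * (qw * g) = (a * qw) * (r * g) by ring.
have -> : e * (b * r * (jw * g)) = (e * (b * jw)) * (r * g) by ring.
by rewrite ler_wpM2r // mulr_ge0.
Qed.

Lemma prod_split (F : 'I_M -> 'I_N -> R) :
  \prod_m0 \prod_j F m0 j =
  \prod_(j : 'I_N | (j < i)%N) F m' j *
  (\prod_(j : 'I_N | ~~ (j < i)%N) F m' j * \prod_(m0 | m0 != m') \prod_j F m0 j).
Proof. by rewrite (bigD1 m') //= (bigID (fun j : 'I_N => (j < i)%N)) /= mulrA. Qed.

Lemma Fw_split Tf c y :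
  \prod_m0 \prod_j Fw Tf m0 j (c m0 j) y =
  \prod_(j : 'I_N | (j < i)%N) Vt Tf (c m' j) (yn y (n - i + j)%N) *
  (\prod_(j : 'I_N | ~~ (j < i)%N) P (c m' j) * \prod_(m0 | m0 != m') \prod_j P (c m0 j)).
Proof.
rewrite (prod_split (fun m0 j => Fw Tf m0 j (c m0 j) y)); congr (_ * (_ * _)).
- by apply: eq_bigr => j h; rewrite /Fw eqxx h.
- by apply: eq_bigr => j /negPf h; rewrite /Fw eqxx h.
- by apply: eq_bigr => m0 /negPf h; apply: eq_bigr => j _; rewrite /Fw h.
Qed.

Lemma GW_ge0 (F : 'I_M -> 'I_N -> X -> OU -> R) G c y :
  (forall m0 j a y, 0 <= F m0 j a y) -> (forall t u b, 0 <= G t u b) -> 0 <= GW F G c y.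
Proof.
move=> F0 G0'; apply: mulr_ge0; [apply: prodr_ge0 => m0 _; apply: prodr_ge0 => j _; apply: F0 | apply: prodr_ge0 => t _; apply: G0'].
Qed.

Lemma Prest_ge0 c : 0 <= \prod_(j : 'I_N | ~~ (j < i)%N) P (c m' j) * \prod_(m0 | m0 != m') \prod_j P (c m0 j).
Proof. by apply: mulr_ge0; apply: prodr_ge0 => *; rewrite ?prodr_ge0 // => *; apply: P_ge0. Qed.

Lemma pw_overlap c y : EV c y ->
  weight P Q star m l c y <= expR (- (t2 * ln (M%:R))) * \sum_(Tf : TT) GW (Fw Tf) G0 c y.
Proof.
move=> ev.
apply: (@le_trans _ _ (expR (- (t2 * ln (M%:R))) * GW (Fw (T0 c y)) G0 c y)); last first.
  rewrite ler_wpM2l ?expR_ge0 // (bigD1 (T0 c y)) //= lerDl.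
  by apply: sumr_ge0 => Tf _; apply: GW_ge0; [apply: Fw_ge0 | apply: G0_ge0].
rewrite weightE /GW Fw_split (prod_split (fun m0 j => P (c m0 j))).
have G0p : 0 <= \prod_t G0 t (c m) (y t) by apply: prodr_ge0 => *; apply: G0_ge0.
apply: aux1; [exact: Prest_ge0 | exact: G0p | ]. exact: key_overlap.
Qed.

Lemma pw_noise c y :
  (forall t : 'I_T, (n - i <= t < n)%N -> ~~ (l <= t.+1 < l + N)%N) -> EV c y ->
  weight P Q star m l c y <= expR (- ((t1 + t2) * ln (M%:R))) * \sum_(Tf : TT) GW (Fw Tf) (Gn Tf) c y.
Proof.
move=> noise ev.
apply: (@le_trans _ _ (expR (- ((t1 + t2) * ln (M%:R))) * GW (Fw (T0 c y)) (Gn (T0 c y)) c y)); last first.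
  rewrite ler_wpM2l ?expR_ge0 // (bigD1 (T0 c y)) //= lerDl.
  by apply: sumr_ge0 => Tf _; apply: GW_ge0; [apply: Fw_ge0 | apply: Gn_ge0].
rewrite weightE /GW Fw_split (prod_split (fun m0 j => P (c m0 j))).
rewrite [in X in X <= _](bigID (fun t : 'I_T => (n - i <= t < n)%N) predT).
rewrite [in X in _ <= X](bigID (fun t : 'I_T => (n - i <= t < n)%N) predT) /=.
have -> : \prod_(t : 'I_T | (n - i <= t < n)%N) G0 t (c m) (y t) = \prod_(t : 'I_T | (n - i <= t < n)%N) Q star (y t).
  by apply: eq_bigr => t h; rewrite /G0 (negPf (noise t h)).
have -> : \prod_(t : 'I_T | (n - i <= t < n)%N) Gn (T0 c y) t (c m) (y t) =
    \prod_(t : 'I_T | (n - i <= t < n)%N) JYt (T0 c y) (y t).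
  by apply: eq_bigr => t h; rewrite /Gn h.
have -> : \prod_(t : 'I_T | ~~ (n - i <= t < n)%N) Gn (T0 c y) t (c m) (y t) =
    \prod_(t : 'I_T | ~~ (n - i <= t < n)%N) G0 t (c m) (y t).
  by apply: eq_bigr => t /negPf h; rewrite /Gn h.
apply: aux2; [exact: Prest_ge0 | | exact: key_noise].
by apply: prodr_ge0 => *; apply: G0_ge0.
Qed.

Lemma card_TT : #|{: TT}| = (i.+1 ^ #|{: X * Y}|)%N.
Proof. by rewrite card_ffun card_ord. Qed.

Lemma bound_all :
  Pml (N := N) (T := T) P Q star m l EV <= expR (- (t2 * ln (M%:R))) * (i.+1 ^ #|{: X * Y}|)%:R.
Proof.
rewrite -card_TT; apply: (Pml_bound _ _ (fun _ => G0)) => //.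
- by move=> *; apply: G0_ge0.
- by move=> *; apply: G0_sum.
- by move=> c y; apply: pw_overlap.
Qed.

Lemma bound_noise :
  (forall t : 'I_T, (n - i <= t < n)%N -> ~~ (l <= t.+1 < l + N)%N) ->
  Pml (N := N) (T := T) P Q star m l EV <= expR (- ((t1 + t2) * ln (M%:R))) * (i.+1 ^ #|{: X * Y}|)%:R.
Proof.
move=> noise; rewrite -card_TT; apply: (Pml_bound _ _ Gn) => //.
- by move=> *; apply: Gn_ge0.
- by move=> *; apply: Gn_sum.
- by move=> c y; apply: pw_noise.
Qed.
End Main.

Lemma sum_bool_count (R : realType) (p : pred nat) (s : seq nat) :
  \sum_(n <- s) ((p n)%:R : R) = (count p s)%:R.
Proof.
elim: s => [|x s IH]; first by rewrite big_nil.
by rewrite big_cons IH /= natrD.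
Qed.

Lemma win_bound (R : realType) l w B : (1 <= B)%N ->
  \sum_(1 <= n < B) (((l <= n < l + w)%N)%:R : R) <= w%:R.
Proof.
move=> B1; rewrite sum_bool_count ler_nat /index_iota.
set K := (B + (l + w))%N.
have E : iota 0 K = iota 0 1 ++ iota 1 (B - 1) ++ iota B (K - B).
  have -> : K = (1 + ((B - 1) + (K - B)))%N by rewrite /K; lia.
  rewrite iotaD iotaD add0n; congr (_ ++ (_ ++ iota _ _)); lia.
have C : count (fun n => (l <= n < l + w)%N) (iota 0 K) = w.
  rewrite -size_filter filter_iota0 ?size_iota; [lia | rewrite /K; lia].
rewrite -{2}C E !count_cat; lia.
Qed.

Lemma leq_pow_base a b e : (a <= b)%N -> (a ^ e <= b ^ e)%N.
Proof. by move=> ab; elim: e => // e IH; rewrite !expnS leq_mul. Qed.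

Theorem lemma2 (R : realType) (X Y : finType) (Q : X -> Y -> R) (star : X) :
  is_channel Q ->
  exists (C : R) (d : nat),
  forall (P : X -> R) (N M A : nat) (t1 t2 : R) (m : 'I_M) (l : nat),
    is_distr P -> (0 < N)%N -> (1 <= A)%N -> (1 <= l <= A)%N ->
    \sum_(m' : 'I_M | m' != m) \sum_(1 <= n < A + N)
      \sum_(1 <= i < (minn N n).+1)
        Pml (N := N) (T := (A + N - 1)%N) P Q star m l
            (Ev (N := N) (T := (A + N - 1)%N) Q star t1 t2 m' n i)
    <= ((M%:R `^ (- (t1 + t2 - 1))) * A%:R + M%:R `^ (- (t2 - 1)))
       * (C * (N%:R) ^+ d).
Proof.
move=> HQ.
have [y0 _] : exists y0 : Y, True.
  case: (pickP (@predT Y)) => [y _|H]; first by exists y.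
  exfalso; have := (HQ star).2; rewrite big_pred0 //.
  by move/esym/eqP; rewrite oner_eq0.
set e := #|{: X * Y}|.
exists (2 ^ (e + 1))%:R, (e + 2)%N.
move=> P N M A t1 t2 m l HP N0 A1 /andP [l1 lA].
have M0 : (0 < M)%N by case: m => k /=; lia.
set lM := ln (M%:R : R).
set e2 := expR (- (t2 * lM)).
set e12 := expR (- ((t1 + t2) * lM)).
set K : R := ((N.+1) ^ e)%:R.
have e2p : 0 <= e2 by apply: expR_ge0.
have e12p : 0 <= e12 by apply: expR_ge0.
have Kp : 0 <= K by rewrite ler0n.
pose W n : R := ((l <= n < l + 2 * N)%N)%:R.
have term : forall m' : 'I_M, m' != m -> forall n, (1 <= n < A + N)%N ->
    forall i, (1 <= i < (minn N n).+1)%N ->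
    Pml (N := N) (T := (A + N - 1)%N) P Q star m l
        (Ev (N := N) (T := (A + N - 1)%N) Q star t1 t2 m' n i)
      <= K * (e12 + e2 * W n).
  move=> m' mm n /andP [n1 nB] i /andP [i1 iB].
  have iN : (i <= N)%N by move: iB; rewrite ltnS leq_min => /andP [].
  have iN2 : (i <= n)%N by move: iB; rewrite ltnS leq_min => /andP [].
  have nT : (n <= A + N - 1)%N by lia.
  have Ki : ((i.+1) ^ e)%:R <= K by rewrite ler_nat leq_pow_base.
  have Kip : 0 <= ((i.+1) ^ e)%:R :> R by rewrite ler0n.
  case: (boolP (l <= n < l + 2 * N)%N) => Wn.
    apply: (le_trans (@bound_all _ _ _ Q star y0 P N M A t1 t2 m m' l n i i1 iN iN2 nT HQ HP mm)).
    rewrite /W Wn mulr1 -/lM -/e2 mulrC mulrDr.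
    apply: (@le_trans _ _ (K * e2)); first by rewrite ler_wpM2r.
    by rewrite lerDr mulr_ge0.
  have noise : forall t : 'I_(A + N - 1), (n - i <= t < n)%N -> ~~ (l <= t.+1 < l + N)%N.
    move=> t /andP [h1 h2]; apply/negP => /andP [h3 h4].
    move: Wn; rewrite negb_and -ltnNge -leqNgt => /orP [h|h]; lia.
  apply: (le_trans (@bound_noise _ _ _ Q star y0 P N M A t1 t2 m m' l n i i1 iN iN2 nT HQ HP mm noise)).
  rewrite /W (negPf Wn) mulr0 addr0 -/lM -/e12 mulrC.
  by rewrite ler_wpM2r.
pose Bn : R := N%:R * (K * ((A + N)%:R * e12 + e2 * (2 * N)%:R)).
have sum_m' : forall m' : 'I_M, m' != m ->
    \sum_(1 <= n < A + N) \sum_(1 <= i < (minn N n).+1)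
      Pml (N := N) (T := (A + N - 1)%N) P Q star m l
          (Ev (N := N) (T := (A + N - 1)%N) Q star t1 t2 m' n i) <= Bn.
  move=> m' mm.
  apply: (@le_trans _ _ (\sum_(1 <= n < A + N) N%:R * (K * (e12 + e2 * W n)))).
    apply: ler_sum_nat => n nr.
    apply: (@le_trans _ _ (\sum_(1 <= i < (minn N n).+1) K * (e12 + e2 * W n))).
      by apply: ler_sum_nat => i ir; apply: term.
    rewrite sumr_const_nat subn1 /= -[leLHS]mulr_natl ler_wpM2r //.
      by apply: mulr_ge0 => //; apply: addr_ge0 => //; apply: mulr_ge0 => //; rewrite /W ler0n.
    by rewrite ler_nat geq_minl.
  rewrite -mulr_sumr -mulr_sumr /Bn ler_wpM2l // ler_wpM2l //.
  rewrite big_split /= sumr_const_nat -mulr_sumr; apply: lerD.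
    by rewrite -[leLHS]mulr_natl ler_wpM2r // ler_nat; lia.
  by apply: ler_wpM2l => //; apply: win_bound; lia.
apply: (@le_trans _ _ (\sum_(m' : 'I_M | m' != m) Bn)).
  by apply: ler_sum => m' mm; apply: sum_m'.
have Bn0 : 0 <= Bn.
  by rewrite /Bn; apply: mulr_ge0; rewrite ?ler0n //; apply: mulr_ge0 => //;
     apply: addr_ge0; apply: mulr_ge0; rewrite ?ler0n.
apply: (@le_trans _ _ (M%:R * Bn)).
  have : \sum_(m' : 'I_M) Bn = M%:R * Bn.
    by rewrite big_const_ord iter_addr_0 mulr_natl.
  by move=> <-; rewrite [leRHS](bigD1 m) //= lerDr.
have Mpos : 0 < (M%:R : R) by rewrite ltr0n.
have hM : (M%:R : R) = expR lM by rewrite lnK ?posrE.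
have powE : forall x, (M%:R : R) `^ x = expR (x * lM).
  by move=> x; rewrite /powR gt_eqF.
set a := M%:R `^ (- (t1 + t2 - 1)).
set b := M%:R `^ (- (t2 - 1)).
have ha : M%:R * e12 = a by rewrite /a powE {1}hM -expRD; congr expR; ring.
have hb : M%:R * e2 = b by rewrite /b powE {1}hM -expRD; congr expR; ring.
have a0 : 0 <= a by apply: powR_ge0.
have b0 : 0 <= b by apply: powR_ge0.
set Nr := (N%:R : R). set Ar := (A%:R : R).
have Nr0 : 0 <= Nr by rewrite ler0n.
have hAN : (A + N)%:R <= 2 * Nr * Ar.
  have -> : 2 * Nr * Ar = (2 * N * A)%:R by rewrite /Nr /Ar !natrM.
  rewrite ler_nat; nia.
have hK : K <= (2 ^ e)%:R * Nr ^+ e.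
  rewrite /K /Nr -natrX -natrM ler_nat -expnMn leq_pow_base //; lia.
have -> : M%:R * Bn = Nr * K * ((A + N)%:R * a + (2 * Nr) * b).
  by rewrite /Bn -ha -hb natrM /Nr; ring.
apply: (@le_trans _ _ (Nr * K * (2 * Nr * Ar * a + 2 * Nr * b))).
  rewrite ler_wpM2l ?mulr_ge0 // lerD // ler_wpM2r //.
apply: (@le_trans _ _ (2 * Nr ^+ 2 * ((2 ^ e)%:R * Nr ^+ e) * (a * Ar + b))).
  have -> : Nr * K * (2 * Nr * Ar * a + 2 * Nr * b) = 2 * Nr ^+ 2 * K * (a * Ar + b) by ring.
  rewrite ler_wpM2r ?addr_ge0 ?mulr_ge0 ?ler0n // ler_wpM2l // mulr_ge0 // exprn_ge0 //.
rewrite le_eqVlt; apply/orP; left; apply/eqP.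
rewrite natrX exprD natrX exprD expr1 !expr2; ring.
Qed.
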